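(* Let $\mathcal{H}$ be a reproducing kernel Hilbert space of functions on a set $X$, with multiplier algebra $\mathcal{M}(\mathcal{H})$. Let $(\phi_n)_{n\ge1}$ be a sequence of elements of the closed unit ball of $\mathcal{M}(\mathcal{H})$. Put $\Phi_0=1$ and $\Phi_n:=\phi_1\phi_2\cdots\phi_n$ for $n\ge1$. Assume there is a multiplier $\Phi\in\mathcal{M}(\mathcal{H})$ such that $\lim_{n\to\infty}\Phi_n(x)=\Phi(x)$ for every $x\in X$. Then for every $f\in\mathcal{H}$, \[ f=\Phi\, M_\Phi^{*}f+\sum_{n=1}^{\infty}\Phi_{n-1}\cdot Q_{\phi_n}M_{\Phi_{n-1}}^{*}f, \] where the series converges in the norm of $\mathcal{H}$.
   Context: For a multiplier $\phi\in\mathcal{M}(\mathcal{H})$, $M_\phi:\mathcal{H}\to\mathcal{H}$ denotes the multiplication operator $M_\phi g=\phi g$, and $M_\phi^*$ its Hilbert space adjoint. The multiplier norm of $\phi$ is the operator norm of $M_\phi$; the closed unit ball of $\mathcal{M}(\mathcal{H})$ consists of the multipliers with $\|M_\phi\|\le 1$. For $\phi\in\mathcal{M}(\mathcal{H})$ define $P_\phi:=M_\phi M_\phi^*$ and $Q_\phi:=I-M_\phi M_\phi^*$, where $I$ is the identity on $\mathcal{H}$. *)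

(* Defs.v *)
From HB Require Import structures.
From mathcomp Require Import all_boot all_order all_algebra.
From mathcomp Require Import all_classical all_reals all_analysis.
From mathcomp.real_closed Require Import complex.
Set Implicit Arguments. Unset Strict Implicit. Unset Printing Implicit Defensive.
Import Order.TTheory GRing.Theory Num.Theory.
Import numFieldNormedType.Exports.
Local Open Scope classical_set_scope.
Local Open Scope ring_scope.

Section RKHS.
Variables (R : realType) (X : Type).
Local Notation C := R[i].
Local Notation fn := (X -> C).

Definition cabs (z : C) : R := ComplexField.Normc.normc z.

Definition fadd (f g : fn) : fn := fun x => f x + g x.
Definition fsub (f g : fn) : fn := fun x => f x - g x.
Definition fscale (a : C) (f : fn) : fn := fun x => a * f x.
Definition fzero : fn := fun _ => 0.

Definition hnorm (ip : fn -> fn -> C) (f : fn) : R := Num.sqrt (complex.Re (ip f f)).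

(* H is a reproducing kernel Hilbert space of functions on X with inner
   product ip (linear in the first variable): a complex inner product space
   of functions, complete for the induced norm, with bounded point
   evaluations (equivalently, having a reproducing kernel). *)
Record is_RKHS (H : set fn) (ip : fn -> fn -> C) : Prop := {
  rkhs0 : H fzero;
  rkhsD : forall f g, H f -> H g -> H (fadd f g);
  rkhsZ : forall a f, H f -> H (fscale a f);
  ipD : forall f g h, H f -> H g -> H h -> ip (fadd f g) h = ip f h + ip g h;
  ipZ : forall a f g, H f -> H g -> ip (fscale a f) g = a * ip f g;
  ipC : forall f g, H f -> H g -> ip g f = (ip f g)^*;
  ip_ge0 : forall f, H f -> 0 <= ip f f;
  ip_eq0 : forall f, H f -> ip f f = 0 -> f = fzero;
  rkhs_complete : forall u : nat -> fn, (forall n, H (u n)) ->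
    (forall e : R, 0 < e -> exists N, forall m n, (N <= m)%N -> (N <= n)%N ->
        hnorm ip (fsub (u m) (u n)) < e) ->
    exists g, H g /\ (fun n => hnorm ip (fsub (u n) g)) @ \oo --> (0 : R);
  rkhs_eval : forall x : X, exists c : R, forall f, H f ->
    cabs (f x) <= c * hnorm ip f
}.

Definition Mop (phi : fn) : fn -> fn := fun g x => phi x * g x.

Definition multiplier (H : set fn) (phi : fn) : Prop :=
  forall g, H g -> H (Mop phi g).

Definition mult_ball (H : set fn) (ip : fn -> fn -> C) (phi : fn) : Prop :=
  multiplier H phi /\ forall g, H g -> hnorm ip (Mop phi g) <= hnorm ip g.

Definition is_adjoint (H : set fn) (ip : fn -> fn -> C) (A B : fn -> fn) : Prop :=
  (forall g, H g -> H (B g)) /\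
  forall f g, H f -> H g -> ip (A f) g = ip f (B g).

Definition Phi_prod (phi : nat -> fn) (n : nat) : fn :=
  fun x => \prod_(1 <= k < n.+1) phi k x.

Definition Qop (phi : fn) (Mstar : fn -> fn) : fn -> fn :=
  fun g => fsub g (Mop phi (Mstar g)).

End RKHS.

(* Main.v *)
Require Import Defs.
From HB Require Import structures.
From mathcomp Require Import all_boot all_order all_algebra.
From mathcomp Require Import all_classical all_reals all_analysis.
From mathcomp.real_closed Require Import complex.
From mathcomp Require Import ring lra.
Set Implicit Arguments. Unset Strict Implicit. Unset Printing Implicit Defensive.
Import Order.TTheory GRing.Theory Num.Theory.
Import numFieldNormedType.Exports.
Local Notation Re := complex.Re.
Local Notation Im := complex.Im.
Local Open Scope classical_set_scope.
Local Open Scope complex_scope.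
Local Open Scope ring_scope.
Section C. Variable R : realType.
Local Notation C := R[i].
Lemma ReD (x y : C) : Re (x + y) = Re x + Re y. Proof. by move: x y => [a b] [c d]. Qed.
Lemma ReN (x : C) : Re (- x) = - Re x. Proof. by case: x. Qed.
Lemma ReB (x y : C) : Re (x - y) = Re x - Re y. Proof. by rewrite ReD ReN. Qed.
Lemma Rereal (r : R) : Re (r%:C) = r. Proof. by []. Qed.
Lemma ReMr (r : R) (x : C) : Re (r%:C * x) = r * Re x. Proof. case: x => a b /=. by rewrite mul0r subr0. Qed.
Lemma ReJ (x : C) : Re (x^*) = Re x. Proof. by case: x. Qed.
Lemma cabs_ge0 (x : C) : 0 <= cabs x. Proof. case: x => a b; rewrite /cabs /=. exact: sqrtr_ge0. Qed.
Lemma mulCJ (x : C) : x * x^* = ((cabs x) ^+ 2)%:C.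
Proof. case: x => a b; rewrite /cabs /= sqr_sqrtr ?addr_ge0 ?sqr_ge0 //.
apply/eqP; rewrite eq_complex /=; apply/andP; split; apply/eqP.
by rewrite mulrN opprK !expr2. by rewrite mulrN mulrC addNr. Qed.
Lemma ge0_real (z : C) : 0 <= z -> z = (Re z)%:C /\ 0 <= Re z.
Proof. case: z => a b; rewrite lecE /= => /andP[/eqP -> h]; by split. Qed.
Lemma Re_le_cabs (x : C) : Re x <= cabs x.
Proof. case: x => a b; rewrite /cabs /=. apply: le_trans (ler_norm a) _.
rewrite -(sqrtr_sqr a) ler_sqrt ?addr_ge0 ?sqr_ge0 // lerDl sqr_ge0 //. Qed.
Lemma cabsM (x y : C) : cabs (x * y) = cabs x * cabs y. Proof. exact: ComplexField.Normc.normcM. Qed.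
Lemma cabsD (x y : C) : cabs (x + y) <= cabs x + cabs y. Proof. exact: le_normcD. Qed.
Lemma cabsN (x : C) : cabs (- x) = cabs x. Proof. exact: normcN. Qed.
Lemma cabsJ (x : C) : cabs (x^*) = cabs x. Proof. case: x => a b; by rewrite /cabs /= sqrrN. Qed.
Lemma cabs0 (x : C) : cabs x = 0 -> x = 0. Proof. exact: ComplexField.Normc.eq0_normc. Qed.
Lemma cabsR (r : R) : cabs r%:C = `|r|. Proof. by rewrite /cabs /= expr0n addr0 sqrtr_sqr. Qed.

Lemma cabsz : cabs (0 : C) = 0. Proof. by rewrite -(rmorph0 (real_complex R)) cabsR normr0. Qed.
End C.
Section Lim.
Variable R : realType.
Lemma cvg0_epsN (u : nat -> R) : u @ \oo --> (0:R) <->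
  forall e, 0 < e -> exists N, forall n, (N <= n)%N -> `|u n| < e.
Proof. split.
- move/cvgrPdist_lt => h e e0; have [N _ hN] := h e e0.
  exists N => n hn; have := hN n hn; by rewrite /= sub0r normrN.
- move=> h; apply/cvgrPdist_lt => e e0; have [N hN] := h e e0.
  exists N => // n /= hn; rewrite sub0r normrN; exact: hN.
Qed.
End Lim.
Section LimC.
Variable R : realType.
Local Notation C := R[i].
Definition climC (u : nat -> C) (l : C) := forall e : R, 0 < e ->
  exists N, forall n, (N <= n)%N -> cabs (u n - l) < e.

Lemma cabsB_sym (a b : C) : cabs (a - b) = cabs (b - a).
Proof. by rewrite -cabsN opprB. Qed.
Lemma cabs_tri (a b c : C) : cabs (a - c) <= cabs (a - b) + cabs (b - c).
Proof. have -> : a - c = (a - b) + (b - c) by rewrite addrA subrK. exact: cabsD. Qed.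

Lemma climC_unique u a b : climC u a -> climC u b -> a = b.
Proof.
move=> ha hb; apply/eqP; rewrite -subr_eq0; apply/eqP/cabs0.
apply/eqP; rewrite eq_le cabs_ge0 andbT; apply/ler_addgt0Pr => e e0.
rewrite add0r.
have e2 : 0 < e / 2 by rewrite divr_gt0.
have [N1 h1] := ha _ e2; have [N2 h2] := hb _ e2.
set n := maxn N1 N2.
have p := h1 n (leq_maxl _ _); have q := h2 n (leq_maxr _ _).
rewrite cabsB_sym in p.
have := cabs_tri a (u n) b. lra.
Qed.

Lemma climC_mul u v a b : climC u a -> climC v b -> climC (fun n => u n * v n) (a * b).
Proof.
move=> ha hb e e0.
have ba0 : 0 < cabs b + 1 by have := cabs_ge0 b; lra.
have aa0 : 0 < cabs a + 1 by have := cabs_ge0 a; lra.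
have e1 : 0 < e / 2 / (cabs b + 1) by rewrite !divr_gt0.
have e2 : 0 < Num.min 1 (e / 2 / (cabs a + 1)) by rewrite lt_min ltr01 !divr_gt0.
have [N1 h1] := ha _ e1; have [N2 h2] := hb _ e2.
exists (maxn N1 N2) => n hn.
have p := h1 n (leq_trans (leq_maxl _ _) hn).
have q := h2 n (leq_trans (leq_maxr _ _) hn).
rewrite lt_min in q; case/andP: q => q1 q2.
have -> : u n * v n - a * b = (u n - a) * v n + a * (v n - b) by ring.
apply: le_lt_trans (cabsD _ _) _; rewrite !cabsM.
have vb : cabs (v n) <= cabs b + 1.
  have := cabs_tri (v n) b 0; rewrite !subr0; lra.
have t1 : cabs (u n - a) * cabs (v n) <= cabs (u n - a) * (cabs b + 1).
  by rewrite ler_wpM2l ?cabs_ge0.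
have t1' : cabs (u n - a) * (cabs b + 1) < e / 2.
  by rewrite -ltr_pdivlMr.
have t2 : cabs a * cabs (v n - b) <= (cabs a + 1) * cabs (v n - b).
  by rewrite ler_wpM2r ?cabs_ge0 //; lra.
have t2' : (cabs a + 1) * cabs (v n - b) < e / 2.
  by rewrite mulrC -ltr_pdivlMr.
lra.
Qed.

Lemma climC_const (c : C) : climC (fun _ => c) c.
Proof. move=> e e0; exists 0%N => n _; by rewrite subrr cabsz. Qed.

Lemma climC_conj u a : climC u a -> climC (fun n => (u n)^*) a^*.
Proof. move=> h e e0; have [N hN] := h e e0; exists N => n hn.
by rewrite -rmorphB cabsJ; apply: hN. Qed.

Lemma climC_ext u v a : (forall n, u n = v n) -> climC u a -> climC v a.
Proof. move=> e h; have -> : v = u by apply: funext => n; rewrite e. done. Qed.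
End LimC.
Definition winv (R : realType) (j : nat) : R := (j.+1%:R)^-1.
Section Arch. Variable R : realType.
Lemma small_inv (e : R) : 0 < e -> exists N, forall n, (N <= n)%N -> winv R n < e.
Proof.
move=> e0; exists (Num.bound (e^-1)) => n hn.
have ei : 0 < e^-1 by rewrite invr_gt0.
have h := archi_boundP (ltW ei).
have h2 : e^-1 < n.+1%:R.
  apply: lt_le_trans h _; rewrite ler_nat; exact: leq_trans hn (leqnSn _).
rewrite /winv -[e]invrK ltf_pV2 ?posrE ?invr_gt0 // ltr0n.
Qed.
End Arch.
Section Arch2. Variable R : realType.
Lemma approx_le (z d : R) : 0 <= d ->
  (forall e, 0 < e -> e <= 1 -> exists a b, [/\ 0 <= a, 0 <= b, z <= (a + b) ^+ 2,
      a ^+ 2 <= d + e & b <= e]) -> z <= d.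
Proof.
move=> d0 h; apply/ler_addgt0Pr => e' e'0.
have k0 : 0 < 2 * d + 6 by lra.
set e := Num.min 1 (e' / (2 * d + 6)).
have e0 : 0 < e by rewrite lt_min ltr01 divr_gt0.
have e1 : e <= 1 by rewrite ge_min lexx.
have e2 : e <= e' / (2 * d + 6) by rewrite ge_min lexx orbT.
have e3 : e * (2 * d + 6) <= e' by rewrite -ler_pdivlMr.
have [a [b [a0 b0 hz ha hb]]] := h e e0 e1.
have a2 : a <= d + 2 by nra.
have t1 : 2 * a * b <= 2 * (d + 2) * e by nra.
have t2 : b ^+ 2 <= e by nra.
have : (a + b) ^+ 2 = a ^+ 2 + 2 * a * b + b ^+ 2 by ring.
nra.
Qed.
End Arch2.
Section Hil.
Variables (R : realType) (X : Type) (H : set (X -> R[i])) (ip : (X -> R[i]) -> (X -> R[i]) -> R[i]).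
Hypothesis hR : is_RKHS H ip.
Local Notation C := R[i].
Local Notation V := (X -> R[i]).
Definition nsq (f : V) : R := Re (ip f f).
Local Notation hn := (hnorm ip).
Local Notation f0 := (@fzero R X).

Lemma fsubE (f g : V) : fsub f g = fadd f (fscale (-1) g).
Proof. by apply: funext => x; rewrite /fsub /fadd /fscale mulN1r. Qed.
Lemma Hsub f g : H f -> H g -> H (fsub f g).
Proof. by move=> hf hg; rewrite fsubE; apply: (rkhsD hR) => //; apply: (rkhsZ hR). Qed.
Lemma HZ a f : H f -> H (fscale a f). Proof. exact: (rkhsZ hR). Qed.
Lemma HD f g : H f -> H g -> H (fadd f g). Proof. exact: (rkhsD hR). Qed.
Lemma H0 : H f0. Proof. exact: (rkhs0 hR). Qed.

#[local] Hint Resolve HZ HD Hsub H0 : core.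
Lemma ipB f g h : H f -> H g -> H h -> ip (fsub f g) h = ip f h - ip g h.
Proof. move=> hf hg hh; rewrite fsubE (ipD hR); try by auto. rewrite (ipZ hR) //; by rewrite mulN1r. Qed.
Lemma ip0l h : H h -> ip f0 h = 0.
Proof. move=> hh; have -> : (f0 : V) = fscale 0 f0 by apply: funext => x; rewrite /fscale mul0r.
by rewrite (ipZ hR) ?H0 // mul0r. Qed.
Lemma ipDr f g h : H f -> H g -> H h -> ip f (fadd g h) = ip f g + ip f h.
Proof. move=> hf hg hh; rewrite (ipC hR); try by auto. rewrite (ipD hR) // rmorphD /=.
by rewrite -!(ipC hR). Qed.
Lemma ipZr a f g : H f -> H g -> ip f (fscale a g) = a^* * ip f g.
Proof. move=> hf hg; rewrite (ipC hR); try by auto. rewrite (ipZ hR) // rmorphM /=.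
by rewrite -!(ipC hR). Qed.
Lemma ipBr f g h : H f -> H g -> H h -> ip f (fsub g h) = ip f g - ip f h.
Proof. move=> hf hg hh; rewrite fsubE ipDr; try by auto. rewrite ipZr // rmorphN rmorph1 mulN1r //. Qed.
Lemma ip0r h : H h -> ip h f0 = 0.
Proof. move=> hh; rewrite (ipC hR); try by auto. by rewrite ip0l // rmorph0. Qed.

Lemma ipff f : H f -> ip f f = (nsq f)%:C.
Proof. move=> hf; rewrite /nsq; exact: (ge0_real ((ip_ge0 hR) f hf)).1. Qed.
Lemma nsq_ge0 f : H f -> 0 <= nsq f.
Proof. move=> hf; rewrite /nsq; exact: (ge0_real ((ip_ge0 hR) f hf)).2. Qed.
Lemma nsq_eq0 f : H f -> nsq f = 0 -> f = f0.
Proof. move=> hf h0; apply: (ip_eq0 hR) => //; by rewrite ipff // h0. Qed.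
Lemma hnE f : hn f = Num.sqrt (nsq f). Proof. by []. Qed.
Lemma hn_ge0 f : 0 <= hn f. Proof. exact: sqrtr_ge0. Qed.
Lemma hn2 f : H f -> hn f ^+ 2 = nsq f.
Proof. by move=> hf; rewrite hnE sqr_sqrtr // nsq_ge0. Qed.

Lemma expand u v t : H u -> H v ->
  nsq (fsub u (fscale t v)) = nsq u - 2 * Re (t^* * ip u v) + (cabs t) ^+ 2 * nsq v.
Proof.
move=> hu hv; have hs : H (fscale t v) by apply: HZ.
rewrite /nsq ipB; try by auto. rewrite !ipBr // (ipZ hR) // ipZr // (ipZ hR) // ipZr //.
rewrite (ipC hR hu hv) (ipff hv) mulrA mulCJ.
have -> : t * (ip u v)^* = (t^* * ip u v)^* by rewrite rmorphM /= conjCK.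
rewrite -rmorphM /= !ReB ReJ !Rereal; lra.
Qed.


Lemma conjR (r : R) : (r%:C : C)^* = r%:C. Proof. exact: conjc_real. Qed.
Lemma cabs1 : cabs (1 : C) = 1. Proof. exact: ComplexField.Normc.normc1. Qed.
Lemma fscale1 (v : V) : fscale 1 v = v.
Proof. by apply: funext => x; rewrite /fscale mul1r. Qed.
Lemma nsqB u v : H u -> H v -> nsq (fsub u v) = nsq u - 2 * Re (ip u v) + nsq v.
Proof. move=> hu hv; rewrite -{1}(fscale1 v) expand // rmorph1 mul1r.
by rewrite cabs1 expr1n mul1r. Qed.
Lemma nsqD u v : H u -> H v -> nsq (fadd u v) = nsq u + 2 * Re (ip u v) + nsq v.
Proof. move=> hu hv.
have -> : fadd u v = fsub u (fscale (-1) v) by apply: funext => x; rewrite /fadd /fsub /fscale mulN1r opprK.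
rewrite expand // rmorphN rmorph1 mulN1r ReN cabsN cabs1 expr1n mul1r; lra. Qed.
Lemma nsqZ a f : H f -> nsq (fscale a f) = cabs a ^+ 2 * nsq f.
Proof. move=> hf; rewrite /nsq (ipZ hR); try by auto. rewrite ipZr // ipff // mulrA mulCJ -rmorphM. by []. Qed.

Lemma CS2 u v : H u -> H v -> cabs (ip u v) ^+ 2 <= nsq u * nsq v.
Proof.
move=> hu hv; have [b0|bn0] := eqVneq (nsq v) 0.
  by rewrite (nsq_eq0 hv b0) ip0r // cabsz expr0n mulr_ge0 // nsq_ge0.
have bp : 0 < nsq v by rewrite lt_def bn0 nsq_ge0.
set c := ip u v; set b := nsq v.
have := nsq_ge0 (Hsub hu (HZ (c * (b^-1)%:C) hv)).
rewrite expand // rmorphM /= conjR -/c mulrAC [c^* * c]mulrC mulCJ -rmorphM Rereal.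
have bi : 0 < b^-1 by rewrite invr_gt0.
rewrite cabsM cabsR (gtr0_norm bi).
set k := cabs c.
have e : (k * b^-1) ^+ 2 * b = k ^+ 2 * b^-1 by rewrite exprMn expr2 -!mulrA mulVf // mulr1.
rewrite e => h.
have h2 : k ^+ 2 * b^-1 <= nsq u by lra.
by rewrite -ler_pdivrMr. Qed.
Lemma CS u v : H u -> H v -> cabs (ip u v) <= hn u * hn v.
Proof. move=> hu hv; rewrite !hnE -sqrtrM ?nsq_ge0 //.
rewrite -(ger0_norm (cabs_ge0 (ip u v))) -sqrtr_sqr ler_sqrt ?CS2 //.
by rewrite mulr_ge0 ?nsq_ge0. Qed.
Lemma ReCS u v : H u -> H v -> Re (ip u v) <= hn u * hn v.
Proof. by move=> hu hv; apply: le_trans (Re_le_cabs _) (CS hu hv). Qed.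
Lemma hn_le f e : H f -> 0 <= e -> nsq f <= e ^+ 2 -> hn f <= e.
Proof. move=> hf e0 h; by rewrite hnE -(ger0_norm e0) -sqrtr_sqr ler_sqrt ?sqr_ge0. Qed.
Lemma hn_tri u v : H u -> H v -> hn (fadd u v) <= hn u + hn v.
Proof. move=> hu hv; apply: hn_le; auto. by rewrite addr_ge0 ?hn_ge0.
rewrite nsqD // -(hn2 hu) -(hn2 hv); have := ReCS hu hv; lra. Qed.
Lemma nsq_sym u v : H u -> H v -> nsq (fsub u v) = nsq (fsub v u).
Proof. move=> hu hv; have -> : fsub v u = fscale (-1) (fsub u v).
  by apply: funext => x; rewrite /fsub /fscale mulN1r opprB.
by rewrite nsqZ ?cabsN ?cabs1 ?expr1n ?mul1r //; auto. Qed.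
Lemma hn_sym u v : H u -> H v -> hn (fsub u v) = hn (fsub v u).
Proof. by move=> hu hv; rewrite !hnE nsq_sym. Qed.
Lemma hn_tri3 u v w : H u -> H v -> H w -> hn (fsub u w) <= hn (fsub u v) + hn (fsub v w).
Proof. move=> hu hv hw; have -> : fsub u w = fadd (fsub u v) (fsub v w).
  by apply: funext => x; rewrite /fsub /fadd subrKA.
apply: hn_tri; auto. Qed.
Lemma hn_lt f e : H f -> 0 < e -> nsq f < e ^+ 2 -> hn f < e.
Proof. move=> hf e0 h; by rewrite hnE -(gtr0_norm e0) -sqrtr_sqr ltr_sqrt ?exprn_gt0. Qed.

Lemma adj_unique A B1 B2 : is_adjoint H ip A B1 -> is_adjoint H ip A B2 ->
  forall g, H g -> B1 g = B2 g.
Proof.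
move=> [h1 a1] [h2 a2] g hg.
have hd : H (fsub (B1 g) (B2 g)) by auto.
have : fsub (B1 g) (B2 g) = f0.
  apply: (ip_eq0 hR) => //; rewrite ipBr; auto.
  by rewrite -a1 // -a2 // subrr.
move=> e; apply: funext => x; have := congr1 (fun h => h x) e.
by rewrite /fsub /fzero => /eqP; rewrite subr_eq0 => /eqP.
Qed.

Lemma adj_comp A1 B1 A2 B2 : is_adjoint H ip A1 B1 -> is_adjoint H ip A2 B2 ->
  (forall f, H f -> H (A2 f)) -> is_adjoint H ip (fun f => A1 (A2 f)) (fun g => B2 (B1 g)).
Proof.
move=> [h1 a1] [h2 a2] hA; split; first by move=> g hg; auto.
move=> f g hf hg; have hAf := hA _ hf; have hBg := h1 _ hg.
by rewrite a1 // a2. Qed.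

Lemma MopM (a b g : V) : Mop a (Mop b g) = Mop (fun x => a x * b x) g.
Proof. by apply: funext => x; rewrite /Mop mulrA. Qed.
Lemma Mop1 (g : V) : Mop (fun _ => 1) g = g.
Proof. by apply: funext => x; rewrite /Mop mul1r. Qed.

Definition contr (psi : V) := multiplier H psi /\ forall g, H g -> nsq (Mop psi g) <= nsq g.

Lemma ball_contr psi : mult_ball H ip psi -> contr psi.
Proof. move=> [hm hb]; split => // g hg; have := hb g hg.
by rewrite !hnE ler_sqrt ?nsq_ge0. Qed.

Lemma contr1 : contr (fun _ => 1).
Proof. by split => [g hg|g hg]; rewrite Mop1. Qed.

Lemma contrM a b : contr a -> contr b -> contr (fun x => a x * b x).
Proof. move=> [ma ca] [mb cb]; split => [g hg|g hg]; rewrite -MopM.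
  by apply: ma; apply: mb.
apply: le_trans (ca _ (mb _ hg)) _; exact: cb. Qed.

Lemma adj_id : is_adjoint H ip (fun f => f) (fun f => f).
Proof. by split. Qed.

Lemma key_ineq psi B a : contr psi -> is_adjoint H ip (Mop psi) B -> H a ->
  nsq (fsub a (Mop psi (B a))) <= nsq a - nsq (B a).
Proof.
move=> [mp cp] [hB aB] ha.
have hBa := hB _ ha; have hpBa := mp _ hBa.
rewrite nsqB // (ipC hR) // aB // ReJ.
have := cp _ hBa; rewrite /nsq; lra.
Qed.

Lemma P_selfadj psi B f g : multiplier H psi -> is_adjoint H ip (Mop psi) B -> H f -> H g ->
  ip (Mop psi (B f)) g = ip f (Mop psi (B g)).
Proof.
move=> mp [hB aB] hf hg.
have hBf := hB _ hf; have hBg := hB _ hg.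
rewrite aB // (ipC hR (mp _ hBg) hf) aB //.
by rewrite (ipC hR hBg hBf). Qed.
Lemma eval_bound x : exists c, 0 < c /\ forall f, H f -> cabs (f x) <= c * hn f.
Proof. have [c hc] := (rkhs_eval hR) x; exists (`|c| + 1); split.
  by have := normr_ge0 c; lra.
move=> f hf; apply: le_trans (hc f hf) _; apply: ler_wpM2r; first exact: hn_ge0.
by have := ler_norm c; lra. Qed.

Lemma pt_conv (u : nat -> V) L x : (forall n, H (u n)) -> H L ->
  (forall e, 0 < e -> exists N, forall n, (N <= n)%N -> hn (fsub (u n) L) < e) ->
  climC (fun n => u n x) (L x).
Proof.
move=> hu hL h e e0; have [c [c0 hc]] := eval_bound x.
have [N hN] := h (e / c) (divr_gt0 e0 c0); exists N => n hn.
have := hc _ (Hsub (hu n) hL); rewrite /fsub => h1.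
apply: le_lt_trans h1 _; rewrite mulrC -ltr_pdivlMr //; exact: hN.
Qed.

Lemma cvg_eps (u : nat -> V) : (fun n => hn (u n)) @ \oo --> (0 : R) ->
  forall e, 0 < e -> exists N, forall n, (N <= n)%N -> hn (u n) < e.
Proof. move/cvg0_epsN => h e e0; have [N hN] := h e e0; exists N => n hn.
by have := hN n hn; rewrite ger0_norm ?hn_ge0. Qed.
Lemma parallel u v : H u -> H v -> nsq (fadd u v) + nsq (fsub u v) = 2 * nsq u + 2 * nsq v.
Proof. move=> hu hv; rewrite nsqD // nsqB //; lra. Qed.

Lemma cabs2 : cabs (2 : C) = 2.
Proof. by rewrite -(rmorph_nat (real_complex R)) cabsR ger0_norm. Qed.

Lemma riesz y : exists k, H k /\ forall g, H g -> g y = ip g k.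
Proof.
case: (pselect (exists h, H h /\ h y != 0)) => [[h [hh hy]]|nh]; last first.
  exists f0; split; first exact: H0. move=> g hg; rewrite ip0r //.
  apply/eqP; apply/negPn/negP => ne; apply: nh; by exists g.
set h1 := fscale (h y)^-1 h.
have hh1 : H h1 by apply: HZ.
have h1y : h1 y = 1 by rewrite /h1 /fscale mulVf.
pose Ns (n : V) := H n /\ n y = 0.
pose S := [set r : R | exists n, Ns n /\ r = nsq (fsub h1 n)].
have S0 : S (nsq (fsub h1 f0)) by exists f0; split; [split; [exact: H0|done]|done].
have Slb : lbound S 0 by move=> r [n [[hn _] ->]]; apply: nsq_ge0; auto.
have hinf : has_inf S by split; [exists (nsq (fsub h1 f0)) | exists 0].
set d := inf S.
have dle : forall n, Ns n -> d <= nsq (fsub h1 n).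
  move=> n hn; apply: (ge_inf (hinf.2)); by exists n.
have d0 : 0 <= d by apply: lb_le_inf => //; exists (nsq (fsub h1 f0)).
have approx : forall j : nat, exists n, Ns n /\ nsq (fsub h1 n) < d + winv R j.
  move=> j; have ej : 0 < winv R j by rewrite /winv invr_gt0 ltr0n.
  have [r [n [hn ->]] hr] := inf_adherent ej hinf; by exists n.
have [ns hns] := choice approx.
have hnsH : forall j, H (ns j) by move=> j; case: (hns j) => [[]].
have cauchy1 : forall i j, nsq (fsub (ns i) (ns j)) <= 2 * winv R i + 2 * winv R j.
  move=> i j; have [[hi yi] li] := hns i; have [[hj yj] lj] := hns j.
  set mid := fscale (2^-1) (fadd (ns i) (ns j)).
  have hmid : Ns mid by split; [apply: HZ; apply: HD|rewrite /mid /fscale /fadd yi yj addr0 mulr0].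
  have := dle _ hmid.
  have := parallel (Hsub hh1 hj) (Hsub hh1 hi).
  have -> : fsub (fsub h1 (ns j)) (fsub h1 (ns i)) = fsub (ns i) (ns j).
    by apply: funext => x; rewrite /fsub; ring.
  have -> : fadd (fsub h1 (ns j)) (fsub h1 (ns i)) = fscale 2 (fsub h1 mid).
    apply: funext => x; rewrite /fsub /fadd /mid /fscale /fadd.
    have t : (2 : C) != 0 by rewrite pnatr_eq0.
    field.
    done.
  rewrite nsqZ ?cabs2; last exact: Hsub hh1 hmid.1.
  rewrite expr2; lra.
have cauchy : forall e : R, 0 < e -> exists N, forall m n, (N <= m)%N -> (N <= n)%N ->
    hn (fsub (ns m) (ns n)) < e.
  move=> e e0; have e4 : 0 < e ^+ 2 / 4 by rewrite divr_gt0 ?exprn_gt0.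
  have [N hN] := small_inv e4; exists N => m n hm hn.
  apply: hn_lt => //; auto.
  have := hN m hm; have := hN n hn; have := cauchy1 m n; lra.
have [m [hm cm]] := (rkhs_complete hR) ns hnsH cauchy.
have cme := cvg_eps cm.
have my : m y = 0.
  have := pt_conv y hnsH hm cme.
  move/(climC_ext (v := fun _ => 0)) => /(_ (fun n => (hns n).1.2)) h0.
  apply/esym; exact: climC_unique (climC_const 0) h0.
set z := fsub h1 m.
have hz : H z by exact: Hsub.
have zy : z y = 1 by rewrite /z /fsub h1y my subr0.
have zd : nsq z <= d.
  apply: approx_le => // e e0 e1.
  have [N1 h1N] := small_inv e0; have [N2 h2N] := cme e e0.
  set j := maxn N1 N2.
  exists (hn (fsub h1 (ns j))), (hn (fsub (ns j) m)); split.
  - exact: hn_ge0.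
  - exact: hn_ge0.
  - have := hn_tri3 hh1 (hnsH j) hm; rewrite -/z -(hn2 hz).
    have := hn_ge0 z; nra.
  - rewrite hn2; last exact: Hsub.
    have := (hns j).2; have := h1N j (leq_maxl _ _); lra.
  - exact: ltW (h2N j (leq_maxr _ _)).
have ortho : forall n, Ns n -> ip z n = 0.
  move=> n [hn ny]; set c := ip z n.
  have np : 0 < nsq n + 1 by have := nsq_ge0 hn; lra.
  set eps := (nsq n + 1)^-1.
  have ep : 0 < eps by rewrite invr_gt0.
  have en : eps * nsq n <= 1.
    by rewrite mulrC ler_pdivrMr // mul1r lerDl ler01.
  have hmt : Ns (fadd m (fscale (eps%:C * c) n)).
    by split; [auto|rewrite /fadd /fscale my ny mulr0 addr0].
  have := dle _ hmt.
  have -> : fsub h1 (fadd m (fscale (eps%:C * c) n)) = fsub z (fscale (eps%:C * c) n).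
    by apply: funext => x; rewrite /z /fsub /fadd opprD addrA.
  rewrite expand // rmorphM /= conjR -mulrA [c^* * c]mulrC mulCJ -rmorphM Rereal.
  rewrite cabsM cabsR (gtr0_norm ep).
  set k := cabs c => h2.
  have k2 : k ^+ 2 <= 0.
    have h3 : 2 * (eps * k ^+ 2) <= eps * (eps * nsq n) * k ^+ 2.
      have : (eps * k) ^+ 2 * nsq n = eps * (eps * nsq n) * k ^+ 2 by ring.
      lra.
    have h4 : eps * (eps * nsq n) * k ^+ 2 <= eps * k ^+ 2.
      rewrite -mulrA ler_pM2l // -[X in _ <= X]mul1r ler_wpM2r // sqr_ge0 //.
    have : 0 < eps * k ^+ 2 -> False by lra.
    move=> hf; rewrite leNgt; apply/negP => kp; apply: hf; exact: mulr_gt0.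
  apply: cabs0; apply/eqP; rewrite -sqrf_eq0 eq_le k2 sqr_ge0 //.
have zp : 0 < nsq z.
  rewrite lt_def nsq_ge0 // andbT; apply/eqP => z0.
  have := nsq_eq0 hz z0 => /(congr1 (fun f => f y)); rewrite zy /fzero.
  by move/eqP; rewrite oner_eq0.
exists (fscale ((nsq z)^-1)%:C z); split; first by auto.
move=> g hg.
have hw : Ns (fsub g (fscale (g y) z)) by split; [auto|rewrite /fsub /fscale zy mulr1 subrr].
have := ortho _ hw; rewrite ipBr; auto; rewrite ipZr // ipff //.
move/eqP; rewrite subr_eq0 => /eqP e1.
have hk : H (fscale ((nsq z)^-1)%:C z) by apply: HZ.
rewrite (ipC hR hk hg) (ipZ hR) // e1 mulrCA -rmorphM /= mulVf ?gt_eqF //.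
by rewrite rmorph1 mulr1 conjCK.
Qed.
Lemma adj_kernel psi B y k : multiplier H psi -> is_adjoint H ip (Mop psi) B -> H k ->
  (forall g, H g -> g y = ip g k) -> B k = fscale (psi y)^* k.
Proof.
move=> mp [hB aB] hk hker.
have hd : H (fsub (B k) (fscale (psi y)^* k)) by apply: Hsub; [apply: hB|apply: HZ].
have horth : forall g, H g -> ip g (fsub (B k) (fscale (psi y)^* k)) = 0.
  move=> g hg; have hBk := hB _ hk; have hsk : H (fscale (psi y)^* k) by apply: HZ.
  rewrite ipBr //.
  rewrite -aB // -(hker _ (mp _ hg)) ipZr // conjCK -(hker _ hg) /Mop subrr //.
have e : fsub (B k) (fscale (psi y)^* k) = f0.
  by apply: nsq_eq0 => //; rewrite /nsq horth // /Re.
apply: funext => x; have := congr1 (fun h => h x) e.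
by rewrite /fsub /fzero => /eqP; rewrite subr_eq0 => /eqP.
Qed.

Lemma ip_cont f (u : nat -> V) L : H f -> (forall n, H (u n)) -> H L ->
  (forall e, 0 < e -> exists N, forall n, (N <= n)%N -> hn (fsub (u n) L) < e) ->
  climC (fun n => ip f (u n)) (ip f L).
Proof.
move=> hf hu hL h e e0.
have c0 : 0 < hn f + 1 by have := hn_ge0 f; lra.
have [N hN] := h (e / (hn f + 1)) (divr_gt0 e0 c0); exists N => n hn.
rewrite -ipBr //; apply: le_lt_trans (CS hf (Hsub (hu n) hL)) _.
have := hN n hn; rewrite ltr_pdivlMr // => h1.
apply: le_lt_trans h1; rewrite mulrC ler_wpM2l ?hn_ge0 //; lra.
Qed.
End Hil.
Section Main.
Variables (R : realType) (X : Type)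
  (H : set (X -> R[i])) (ip : (X -> R[i]) -> (X -> R[i]) -> R[i])
  (phi : nat -> (X -> R[i])) (Phi : X -> R[i])
  (Mstar_phi : nat -> (X -> R[i]) -> (X -> R[i]))
  (Mstar_Phi_n : nat -> (X -> R[i]) -> (X -> R[i]))
  (Mstar_Phi : (X -> R[i]) -> (X -> R[i])).
Hypothesis hR : is_RKHS H ip.
Hypothesis hball : forall n, (1 <= n)%N -> mult_ball H ip (phi n).
Hypothesis hPhi : multiplier H Phi.
Hypothesis hconv : forall x : X, forall e : R, 0 < e -> exists N, forall n, (N <= n)%N ->
      cabs (Phi_prod phi n x - Phi x) < e.
Hypothesis hadj_phi : forall n, (1 <= n)%N -> is_adjoint H ip (Mop (phi n)) (Mstar_phi n).
Hypothesis hadj_Phin : forall n, is_adjoint H ip (Mop (Phi_prod phi n)) (Mstar_Phi_n n).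
Hypothesis hadj_Phi : is_adjoint H ip (Mop Phi) Mstar_Phi.
Local Notation V := (X -> R[i]).
Local Notation Pp := (Phi_prod phi).
Local Notation a := Mstar_Phi_n.
Local Notation nsq := (nsq ip).
Local Notation contr := (contr H ip).
Local Notation hn := (hnorm ip).

Definition psi n k : V := fun x => \prod_(n.+1 <= j < (n + k).+1) phi j x.

Lemma Pp0 : Pp 0 = fun _ => 1.
Proof. by apply: funext => x; rewrite /Phi_prod big_geq. Qed.
Lemma PpS n : Pp n.+1 = fun x => Pp n x * phi n.+1 x.
Proof. by apply: funext => x; rewrite /Phi_prod big_nat_recr. Qed.
Lemma psi0 n : psi n 0 = fun _ => 1.
Proof. by apply: funext => x; rewrite /psi addn0 big_geq. Qed.
Lemma psiS n k : psi n k.+1 = fun x => psi n k x * phi (n + k).+1 x.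
Proof. apply: funext => x; rewrite /psi addnS big_nat_recr //=. by rewrite ltnS leq_addr. Qed.
Lemma Pp_split n k : Pp (n + k) = fun x => Pp n x * psi n k x.
Proof. apply: funext => x; rewrite /Phi_prod /psi (@big_cat_nat _ _ _ n.+1) //=.
by rewrite ltnS leq_addr. Qed.

Lemma psi_ok n k : contr (psi n k) /\ exists B, is_adjoint H ip (Mop (psi n k)) B.
Proof.
elim: k => [|k [ck [B hB]]].
  rewrite psi0; split; first exact: contr1.
  exists (fun f => f); by split => // f g hf hg; rewrite Mop1.
have hb := hball (ltn0Sn (n + k)).
have cp := ball_contr hR hb.
rewrite psiS; split; first exact: contrM.
exists (fun g => Mstar_phi (n + k).+1 (B g)).
have -> : Mop (fun x => psi n k x * phi (n + k).+1 x) = (fun g => Mop (psi n k) (Mop (phi (n + k).+1) g)).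
  by apply: funext => g; rewrite MopM.
apply: adj_comp => //; first exact: hadj_phi.
exact: hb.1.
Qed.

Lemma Pp_contr n : contr (Pp n).
Proof. have -> : Pp n = psi 0 n by apply: funext => x; rewrite /psi add0n.
exact: (psi_ok 0 n).1. Qed.

Lemma aH n g : H g -> H (a n g). Proof. exact: (hadj_Phin n).1. Qed.

Lemma a0 g : H g -> a 0 g = g.
Proof. move=> hg; have h := hadj_Phin 0.
have h' : is_adjoint H ip (Mop (Pp 0)) (fun f => f).
  by split => // f k hf hk; rewrite Pp0 Mop1.
exact: (adj_unique hR h h' hg). Qed.

Lemma mulPp n : multiplier H (Pp n). Proof. exact: (Pp_contr n).1. Qed.

Lemma aS n g : H g -> a n.+1 g = Mstar_phi n.+1 (a n g).
Proof. move=> hg.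
have E : Mop (Pp n.+1) = fun f => Mop (Pp n) (Mop (phi n.+1) f).
  by apply: funext => f; rewrite PpS MopM.
have h' : is_adjoint H ip (Mop (Pp n.+1)) (fun g => Mstar_phi n.+1 (a n g)).
  rewrite E; apply: adj_comp; [exact: hadj_Phin|exact: hadj_phi|exact: (hball (ltn0Sn n)).1].
exact: (adj_unique hR (hadj_Phin n.+1) h' hg). Qed.

Lemma a_split n k : exists B, is_adjoint H ip (Mop (psi n k)) B /\ forall g, H g -> a (n + k) g = B (a n g).
Proof.
have [[mp _] [B hB]] := psi_ok n k; exists B; split => // g hg.
have E : Mop (Pp (n + k)) = fun f => Mop (Pp n) (Mop (psi n k) f).
  by apply: funext => f; rewrite Pp_split MopM.
have h' : is_adjoint H ip (Mop (Pp (n + k))) (fun g => B (a n g)).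
  rewrite E; apply: adj_comp => //; exact: hadj_Phin.
exact: (adj_unique hR (hadj_Phin (n + k)) h' hg). Qed.

Definition Pn n g : V := Mop (Pp n) (a n g).

Lemma PnH n g : H g -> H (Pn n g). Proof. by move=> hg; apply: mulPp; apply: aH. Qed.

Lemma key n k g : H g -> nsq (fsub (Pn n g) (Pn (n + k) g)) <= nsq (a n g) - nsq (a (n + k) g).
Proof.
move=> hg; have [B [hB e]] := a_split n k.
have ck := (psi_ok n k).1.
have hag := aH n hg.
have hBa : H (B (a n g)) := hB.1 _ hag.
rewrite e //.
have -> : fsub (Pn n g) (Pn (n + k) g) = Mop (Pp n) (fsub (a n g) (Mop (psi n k) (B (a n g)))).
  by apply: funext => x; rewrite /Pn /fsub /Mop e // Pp_split; ring.
have hs : H (fsub (a n g) (Mop (psi n k) (B (a n g)))).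
  apply: (Hsub hR) => //; exact: ck.1.
exact: le_trans ((Pp_contr n).2 _ hs) (key_ineq hR ck hB hag).
Qed.



Lemma sconv g : H g -> exists L, H L /\ forall e, 0 < e -> exists N, forall n, (N <= n)%N ->
  hn (fsub (Pn n g) L) < e.
Proof.
move=> hg.
pose s n := nsq (a n g).
have s0 : forall n, 0 <= s n by move=> n; rewrite /s; apply: (nsq_ge0 hR); exact: aH.
have sdec : forall n m, (n <= m)%N -> s m <= s n.
  move=> n m nm; have [k ->] : exists k, m = (n + k)%N by exists (m - n)%N; rewrite subnKC.
  have := key n k hg; have := nsq_ge0 hR (Hsub hR (PnH n hg) (PnH (n + k) hg)).
  rewrite /s; lra.
pose S := [set r : R | exists n, r = s n].
have hinf : has_inf S by split; [exists (s 0%N); exists 0%N | exists 0 => r [n ->]].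
have cauchy : forall e : R, 0 < e -> exists N, forall m n, (N <= m)%N -> (N <= n)%N ->
    hn (fsub (Pn m g) (Pn n g)) < e.
  move=> e e0; have e2 : 0 < e ^+ 2 by rewrite exprn_gt0.
  have [r [N ->] hr] := inf_adherent e2 hinf.
  have bnd : forall p q, (N <= p)%N -> (p <= q)%N -> nsq (fsub (Pn p g) (Pn q g)) < e ^+ 2.
    move=> p q Np pq; have [k ->] : exists k, q = (p + k)%N by exists (q - p)%N; rewrite subnKC.
    have := key p k hg; have := sdec _ _ Np.
    have : inf S <= s (p + k)%N by apply: (ge_inf hinf.2); exists (p + k)%N.
    rewrite /s; lra.
  exists N => m n hm hmn; apply: (hn_lt (Hsub hR (PnH m hg) (PnH n hg)) e0).
  case: (leqP m n) => mn; first exact: bnd hm mn.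
  rewrite (nsq_sym hR (PnH m hg) (PnH n hg)); exact: bnd hmn (ltnW mn).
have [L [hL cL]] := (rkhs_complete hR) (fun n => Pn n g) (fun n => PnH n hg) cauchy.
by exists L; split => //; apply: (cvg_eps cL).
Qed.

Lemma ident f : H f -> forall e, 0 < e -> exists N, forall n, (N <= n)%N ->
  hn (fsub (Pn n f) (Mop Phi (Mstar_Phi f))) < e.
Proof.
move=> hf.
have [L [hL cL]] := sconv hf.
suff E : L = Mop Phi (Mstar_Phi f) by rewrite -E.
apply: funext => y.
have [k [hk hker]] := riesz hR y.
have [K [hK cK]] := sconv hk.
have aNk : forall N, a N k = fscale (Pp N y)^* k.
  move=> N; have h := adj_kernel hR (mulPp N) (hadj_Phin N) hk hker; exact h.
have aPk : Mstar_Phi k = fscale (Phi y)^* k.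
  have h := adj_kernel hR hPhi hadj_Phi hk hker; exact h.
have KE : K = Mop Phi (Mstar_Phi k).
  apply: funext => x.
  have c1 := pt_conv hR x (fun n => PnH n hk) hK cK.
  have c2 : climC (fun n => Pn n k x) (Mop Phi (Mstar_Phi k) x).
    rewrite aPk /Mop /fscale.
    apply: (climC_ext (u := fun n => Pp n x * ((Pp n y)^* * k x))).
      by move=> n; rewrite /Pn aNk /Mop /fscale.
    apply: climC_mul; first exact: hconv.
    apply: climC_mul; [exact: climC_conj (hconv y) | exact: climC_const].
  exact: climC_unique c1 c2.
have c1 := pt_conv hR y (fun n => PnH n hf) hL cL.
have c2 : climC (fun n => Pn n f y) (Mop Phi (Mstar_Phi f) y).
  apply: (climC_ext (u := fun n => ip f (Pn n k))).
    move=> n; rewrite (hker _ (PnH n hf)) /Pn.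
    by rewrite (P_selfadj hR (mulPp n) (hadj_Phin n) hf hk).
  have c3 := ip_cont hR hf (fun n => PnH n hk) hK cK.
  have e3 : ip f K = Mop Phi (Mstar_Phi f) y.
    rewrite KE -(P_selfadj hR hPhi hadj_Phi hf hk) -hker //.
    apply: hPhi; exact: hadj_Phi.1.
  by rewrite -e3.
exact: climC_unique c1 c2.
Qed.

Lemma final f : H f ->
    (fun N : nat => hn
       (fsub f (fun x => Mop Phi (Mstar_Phi f) x +
          \sum_(1 <= n < N.+1)
             Mop (Pp n.-1)
               (Qop (phi n) (Mstar_phi n) (a n.-1 f)) x)))
      @ \oo --> (0 : R).
Proof.
move=> hf.
have tel : forall N x, \sum_(1 <= n < N.+1) Mop (Pp n.-1) (Qop (phi n) (Mstar_phi n) (a n.-1 f)) x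
    = f x - Pn N f x.
  move=> N x; elim: N => [|N IH].
    by rewrite big_geq // /Pn a0 // Pp0 /Mop mul1r subrr.
  rewrite big_nat_recr //= IH /Mop /Qop /fsub /Mop -aS // /Pn PpS /Mop; ring.
apply/cvg0_epsN => e e0; have [N hN] := ident hf e0; exists N => n hn.
have -> : fsub f (fun x => Mop Phi (Mstar_Phi f) x +
          \sum_(1 <= n < n.+1) Mop (Pp n.-1) (Qop (phi n) (Mstar_phi n) (a n.-1 f)) x)
    = fsub (Pn n f) (Mop Phi (Mstar_Phi f)).
  apply: funext => x; rewrite [in LHS]/fsub tel /fsub; ring.
rewrite ger0_norm ?hn_ge0 //; exact: hN.
Qed.
End Main.

Theorem theorem2p2 (R : realType) (X : Type)
  (H : set (X -> R[i])) (ip : (X -> R[i]) -> (X -> R[i]) -> R[i])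
  (phi : nat -> (X -> R[i])) (Phi : X -> R[i])
  (Mstar_phi : nat -> (X -> R[i]) -> (X -> R[i]))
  (Mstar_Phi_n : nat -> (X -> R[i]) -> (X -> R[i]))
  (Mstar_Phi : (X -> R[i]) -> (X -> R[i])) :
  is_RKHS H ip ->
  (forall n, (1 <= n)%N -> mult_ball H ip (phi n)) ->
  multiplier H Phi ->
  (forall x : X, forall e : R, 0 < e -> exists N, forall n, (N <= n)%N ->
      cabs (Phi_prod phi n x - Phi x) < e) ->
  (forall n, (1 <= n)%N -> is_adjoint H ip (Mop (phi n)) (Mstar_phi n)) ->
  (forall n, is_adjoint H ip (Mop (Phi_prod phi n)) (Mstar_Phi_n n)) ->
  is_adjoint H ip (Mop Phi) Mstar_Phi ->
  forall f, H f ->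
    (fun N : nat => hnorm ip
       (fsub f (fun x => Mop Phi (Mstar_Phi f) x +
          \sum_(1 <= n < N.+1)
             Mop (Phi_prod phi n.-1)
               (Qop (phi n) (Mstar_phi n) (Mstar_Phi_n n.-1 f)) x)))
      @ \oo --> (0 : R).
Proof.
move=> hR hball hPhi hconv hadj_phi hadj_Phin hadj_Phi f hf.
exact: (final hR hball hPhi hconv hadj_phi hadj_Phin hadj_Phi hf).
Qed.
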